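(* The category $\mathsf{Stone}^{\mathsf{R}}$ is equivalent to the category $\mathsf{BA}^\mathsf{S}$. The equivalence is given by the functor $\mathsf{Clop}\colon\mathsf{Stone}^{\mathsf{R}}\to\mathsf{BA}^\mathsf{S}$ sending a Stone space $X$ to the boolean algebra $\mathsf{Clop}(X)$ of its clopen subsets and a closed relation $R\colon X\to Y$ to the subordination $S_R\colon\mathsf{Clop}(X)\to\mathsf{Clop}(Y)$ with $U\mathrel{S_R}V\iff R[U]\subseteq V$, and the functor $\mathsf{Ult}\colon\mathsf{BA}^\mathsf{S}\to\mathsf{Stone}^{\mathsf{R}}$ sending a boolean algebra $A$ to its Stone space $\mathsf{Ult}(A)$ of ultrafilters and a subordination $S\colon A\to B$ to the closed relation $R_S\colon\mathsf{Ult}(A)\to\mathsf{Ult}(B)$ with $x\mathrel{R_S}y\iff S[x]\subseteq y$.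
   Context: A Stone space is a zero-dimensional compact Hausdorff space. A relation $R\subseteq X\times Y$ between topological spaces is closed if it is a closed subset of $X\times Y$. For $F\subseteq X$, $R[F]=\{y\mid \exists x\in F,\ x\mathrel{R}y\}$. $\mathsf{Stone}^{\mathsf{R}}$ is the category of Stone spaces and closed relations, with identity relations as identities and relational composition. A subordination relation from a boolean algebra $A$ to a boolean algebra $B$ is a relation $S\subseteq A\times B$ such that for $a,b\in A$, $c,d\in B$: (S1) $0\mathrel{S}0$ and $1\mathrel{S}1$; (S2) $a\mathrel{S}c$ and $b\mathrel{S}c$ imply $(a\vee b)\mathrel{S}c$; (S3) $a\mathrel{S}c$ and $a\mathrel{S}d$ imply $a\mathrel{S}(c\wedge d)$; (S4) $a\le b$, $b\mathrel{S}c$, $c\le d$ imply $a\mathrel{S}d$. $\mathsf{BA}^\mathsf{S}$ is the category of boolean algebras and subordination relations; the identity on $A$ is $\le_A$ and composition is relational composition ($a\mathrel{(S_2\circ S_1)}c$ iff $\exists b$ with $a\mathrel{S_1}b\mathrel{S_2}c$). $S[x]=\{b\mid\exists a\in x,\ a\mathrel{S}b\}$. *)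

(* Defs.v *)
From HB Require Import structures.
From mathcomp Require Import all_boot all_order.
From mathcomp Require Import all_classical.
From mathcomp Require Import topology.

Set Implicit Arguments.
Unset Strict Implicit.
Unset Printing Implicit Defensive.

Import Order.TTheory.
Local Open Scope classical_set_scope.

(** relational composition, written as in the paper: [rel_comp R2 R1]
    is "R2 o R1", i.e. a (R2 o R1) c iff exists b, a R1 b and b R2 c. *)
Definition rel_comp (T1 T2 T3 : Type) (R2 : T2 -> T3 -> Prop)
  (R1 : T1 -> T2 -> Prop) : T1 -> T3 -> Prop :=
  fun a c => exists b, R1 a b /\ R2 b c.

Definition rel_eq (T1 T2 : Type) (R R' : T1 -> T2 -> Prop) : Prop :=
  forall a b, R a b <-> R' a b.

Definition rel_img (T1 T2 : Type) (R : T1 -> T2 -> Prop) (F : set T1) : set T2 :=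
  [set y | exists2 x, F x & R x y].

Definition zero_dim (X : topologicalType) : Prop :=
  forall (U : set X) (x : X), open U -> U x ->
    exists V : set X, [/\ clopen V, V x & V `<=` U].

Definition stone_space (X : topologicalType) : Prop :=
  [/\ compact [set: X], hausdorff_space X & zero_dim X].

Definition closed_rel (X Y : topologicalType) (R : X -> Y -> Prop) : Prop :=
  closed [set p : X * Y | R p.1 p.2].

Definition rel_id (T : Type) : T -> T -> Prop := fun x y => x = y.

Definition stone_iso (X Y : topologicalType) (R : X -> Y -> Prop) : Prop :=
  closed_rel R /\
  exists R' : Y -> X -> Prop, [/\ closed_rel R',
     rel_eq (rel_comp R' R) (@rel_id X) & rel_eq (rel_comp R R') (@rel_id Y)].

(* Boolean algebras are MathComp's complemented distributive lattices  *)
(* with top and bottom ([ctbDistrLatticeType]).                        *)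

(** identity morphism of BA^S : the order <=_A *)
Definition ba_le d (A : ctbDistrLatticeType d) : A -> A -> Prop :=
  fun a b => (a <= b)%O.

Definition subordination d1 (A : ctbDistrLatticeType d1)
  d2 (B : ctbDistrLatticeType d2) (S : A -> B -> Prop) : Prop :=
  [/\ S \bot%O \bot%O /\ S \top%O \top%O,
      (forall (a b : A) (c : B), S a c -> S b c -> S (a `|` b)%O c),
      (forall (a : A) (c d : B), S a c -> S a d -> S a (c `&` d)%O) &
      (forall (a b : A) (c d : B), (a <= b)%O -> S b c -> (c <= d)%O -> S a d)].

Definition ba_iso d1 (A : ctbDistrLatticeType d1)
  d2 (B : ctbDistrLatticeType d2) (S : A -> B -> Prop) : Prop :=
  subordination S /\
  exists S' : B -> A -> Prop, [/\ subordination S',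
     rel_eq (rel_comp S' S) (@ba_le _ A) & rel_eq (rel_comp S S') (@ba_le _ B)].

Fact clop_display : Order.disp_t. Proof. exact: Order.Disp tt tt. Qed.

Section Clop.
Variable X : topologicalType.

Definition clopenb : {pred set X} := fun U => `[< clopen U >].

Record clop := Clop { clop_val :> set X; clop_prop : clopenb clop_val }.

HB.instance Definition _ := [isSub for clop_val].
HB.instance Definition _ := [Choice of clop by <:].

Fact clopenb_meet : meet_closed clopenb.
Proof.
move=> U V; rewrite !inE /clopenb => cU cV.
rewrite meetEset; exact (clopenI cU cV).
Qed.

Fact clopenb_join : join_closed clopenb.
Proof.
move=> U V; rewrite !inE /clopenb => cU cV.
rewrite joinEset; exact (clopenU cU cV).
Qed.

Fact clopenb_bot : (\bot%O : set X) \in clopenb.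
Proof. rewrite inE botEset; exact: clopen0. Qed.

Fact clopenb_top : (\top%O : set X) \in clopenb.
Proof. rewrite inE topEset; exact: clopenT. Qed.

HB.instance Definition _ := Order.SubChoice_isTBSubLattice.Build
  set_display (set X) clopenb clop_display clop
  clopenb_meet clopenb_join clopenb_bot clopenb_top.

Fact clop_meetUl : @left_distributive clop clop Order.meet Order.join.
Proof.
move=> U V W; apply: val_inj => /=.
exact: meetUl.
Qed.

HB.instance Definition _ :=
  Order.Lattice_Meet_isDistrLattice.Build clop_display clop clop_meetUl.

Fact clopenb_compl (U : clop) : clopenb (~` (clop_val U)).
Proof.
case: U => U /= /asboolP cU; apply/asboolP; exact: (clopenC U cU).
Qed.

Definition clop_compl (U : clop) : clop := Clop (clopenb_compl U).

Fact clop_joinxC (U : clop) : (U `|` clop_compl U)%O = \top%O.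
Proof.
apply: val_inj => /=.
by rewrite joinEset topEset setUv.
Qed.

Fact clop_meetxC (U : clop) : (U `&` clop_compl U)%O = \bot%O.
Proof.
apply: val_inj => /=.
by rewrite meetEset botEset setICr.
Qed.

HB.instance Definition _ := Order.TBDistrLattice_hasComplement.Build
  clop_display clop clop_joinxC clop_meetxC.

End Clop.

Section Ult.
Variables (d : Order.disp_t) (A : ctbDistrLatticeType d).

Definition ba_filter (x : set A) : Prop :=
  [/\ x \top%O,
      (forall a b, x a -> (a <= b)%O -> x b) &
      (forall a b, x a -> x b -> x (a `&` b)%O)].

Definition ba_ultrafilter (x : set A) : Prop :=
  [/\ ba_filter x, ~ x \bot%O &
      forall y : set A, ba_filter y -> ~ y \bot%O -> x `<=` y -> y = x].

Definition ultb : {pred set A} := fun x => `[< ba_ultrafilter x >].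

Record ult := Ult { ult_val :> set A; ult_prop : ultb ult_val }.

HB.instance Definition _ := [isSub for ult_val].
HB.instance Definition _ := [Choice of ult by <:].

(** Stone topology: generated by the (sub)base of sets
    { x in Ult(A) | a in x }, a in A (indexed through [Some a]). *)
Definition ult_subbase (o : option A) : set ult :=
  if o is Some a then [set x : ult | ult_val x a] else setT.

HB.instance Definition _ := isSubBaseTopological.Build ult
  (range (@Some A)) ult_subbase.

End Ult.

Definition S_of (X Y : topologicalType) (R : X -> Y -> Prop) :
  clop X -> clop Y -> Prop :=
  fun U V => rel_img R (clop_val U) `<=` clop_val V.

Definition R_of d1 (A : ctbDistrLatticeType d1) d2 (B : ctbDistrLatticeType d2)
  (S : A -> B -> Prop) : ult A -> ult B -> Prop :=
  fun x y => rel_img S (ult_val x) `<=` ult_val y.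

(* Main.v *)
Require Import Defs.
From HB Require Import structures.
From mathcomp Require Import all_boot all_order.
From mathcomp Require Import all_classical.
From mathcomp Require Import topology.
From mathcomp Require unstable.
Import Order.Theory.
Local Open Scope classical_set_scope.

Set Implicit Arguments.
Unset Strict Implicit.
Unset Printing Implicit Defensive.

Section UF.
Variables (d : Order.disp_t) (A : ctbDistrLatticeType d).
Implicit Types (a b c : A) (x y z F I : set A).

Definition ba_ideal I : Prop :=
  [/\ I \bot%O, (forall a b, I b -> (a <= b)%O -> I a) &
      (forall a b, I a -> I b -> I (a `|` b)%O)].

Lemma filter_top x : ba_filter x -> x \top%O.
Proof. by case. Qed.
Lemma filter_up x a b : ba_filter x -> x a -> (a <= b)%O -> x b.
Proof. by case=> _ H _; apply: H. Qed.
Lemma filter_meet x a b : ba_filter x -> x a -> x b -> x (a `&` b)%O.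
Proof. by case=> _ _ H; apply: H. Qed.
Lemma filter_meetE x a b : ba_filter x -> x (a `&` b)%O <-> x a /\ x b.
Proof.
move=> fx; split; last by case; exact: filter_meet.
by move=> h; split; apply: filter_up h _; rewrite ?leIl ?leIr.
Qed.

Lemma uf_filter x : ba_ultrafilter x -> ba_filter x. Proof. by case. Qed.
Lemma uf_proper x : ba_ultrafilter x -> ~ x \bot%O. Proof. by case. Qed.

Definition fadd x a : set A := [set e | exists2 c, x c & (c `&` a <= e)%O].

Lemma fadd_filter x a : ba_filter x -> ba_filter (fadd x a).
Proof.
move=> fx; split.
- by exists \top%O; [exact: filter_top|exact: lex1].
- by move=> e f [c xc le] ef; exists c => //; exact: le_trans ef.
- move=> e f [c xc le] [c' xc' le']; exists (c `&` c')%O; first exact: filter_meet.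
  rewrite lexI; apply/andP; split.
    by apply: le_trans le; rewrite leI2 // leIl.
  by apply: le_trans le'; rewrite leI2 // leIr.
Qed.

Lemma fadd_sub x a : ba_filter x -> x `<=` fadd x a.
Proof. by move=> fx e xe; exists e => //; exact: leIl. Qed.

Lemma fadd_in x a : ba_filter x -> fadd x a a.
Proof. by move=> fx; exists \top%O; [exact: filter_top|rewrite meet1x]. Qed.

Lemma uf_prime x a : ba_ultrafilter x -> x a \/ x (~` a)%O.
Proof.
move=> ux; have fx := uf_filter ux.
have [xa|nxa] := pselect (x (~` a)%O); first by right.
left; have [_ _ mx] := ux.
have e : fadd x a = x.
  apply: mx; [exact: fadd_filter| |exact: fadd_sub].
  case=> c xc; rewrite lex0 => /eqP cab; apply: nxa; apply: (filter_up fx xc).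
  by rewrite -disj_leC cab eqxx.
by rewrite -e; exact: fadd_in.
Qed.

Lemma uf_compl x a : ba_ultrafilter x -> x (~` a)%O <-> ~ x a.
Proof.
move=> ux; split.
  move=> xna xa; apply: (uf_proper ux); rewrite -(meetxC a).
  exact: filter_meet (uf_filter ux) xa xna.
by move=> nxa; case: (uf_prime a ux).
Qed.

Lemma uf_join x a b : ba_ultrafilter x -> x (a `|` b)%O -> x a \/ x b.
Proof.
move=> ux xab; have [xa|xna] := uf_prime a ux; first by left.
have [xb|xnb] := uf_prime b ux; first by right.
exfalso; apply: (uf_proper ux).
have := filter_meet (uf_filter ux) xab (filter_meet (uf_filter ux) xna xnb).
by rewrite -complU meetxC.
Qed.

Lemma prime_uf x : ba_filter x -> ~ x \bot%O -> (forall a, x a \/ x (~` a)%O) ->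
  ba_ultrafilter x.
Proof.
move=> fx nb pr; split => // y fy ny sxy; apply/seteqP; split => // b yb.
have [//|xnb] := pr b; exfalso; apply: ny; rewrite -(meetxC b).
by apply: filter_meet fy yb _; exact: sxy.
Qed.

Lemma ideal_down I a b : ba_ideal I -> I b -> (a <= b)%O -> I a.
Proof. by case=> _ H _; apply: H. Qed.
Lemma ideal_join I a b : ba_ideal I -> I a -> I b -> I (a `|` b)%O.
Proof. by case=> _ _ H; apply: H. Qed.

Lemma ult_ext F I : ba_filter F -> ba_ideal I -> (forall a, F a -> ~ I a) ->
  exists z, [/\ ba_ultrafilter z, F `<=` z & forall a, z a -> ~ I a].
Proof.
move=> fF iI dFI.
pose P := fun G : set A => ba_filter (F `|` G) /\ (forall a, (F `|` G) a -> ~ I a).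
have [M [[fM dM] maxM]] : exists M, P M /\ forall B, M `<` B -> ~ P B.
  apply: Zorn_bigcup => C CP tC; split.
  - split; first by left; exact: filter_top.
    + move=> a b [Fa|[X CX Xa]] ab; first by left; exact: filter_up Fa ab.
      have [fX _] := CP X CX.
      case: (filter_up fX (or_intror Xa) ab) => [Fb|Xb]; first by left.
      by right; exists X.
    + have key : forall X a b, C X -> (F `|` X) a -> (F `|` X) b ->
          (F `|` \bigcup_(X in C) X) (a `&` b)%O.
        move=> X a b CX ha hb; have [fX _] := CP X CX.
        by case: (filter_meet fX ha hb) => [?|?]; [left|right; exists X].
      move=> a b [Fa|[X CX Xa]] [Fb|[Y CY Yb]].
      * by left; exact: filter_meet.
      * by apply: (key Y) => //; [left|right].
      * by apply: (key X) => //; [right|left].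
      * have [XY|YX] := tC X Y CX CY.
          by apply: (key Y) => //; right => //; exact: XY.
        by apply: (key X) => //; right => //; exact: YX.
  - by move=> a [Fa|[X CX Xa]]; [exact: dFI|have [_ dX] := CP X CX; apply: dX; right].
set m := F `|` M.
have mmax : forall y, ba_filter y -> (forall a, y a -> ~ I a) -> m `<=` y -> y = m.
  move=> y fy dy my; apply/seteqP; split => //.
  apply: contrapT => nym.
  have Py : P y.
    have Fy : F `|` y = y by apply/setUidPr => a Fa; apply: my; left.
    by rewrite /P Fy; split.
  apply: (maxM y) => //; split; first by move=> a Ma; apply: my; right.
  move=> yM; apply: nym => a ya; right; exact: yM.
have nb : ~ m \bot%O by move=> mb; case: iI => I0 _ _; exact: (dM _ mb I0).
exists m; split; last by move=> a ma; exact: dM.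
- apply: prime_uf => // a; apply: contrapT => /not_orP [nma nmna].
  have fa := fadd_filter a fM; have fna := fadd_filter (~` a)%O fM.
  have [e [ae Ie]] : exists e, fadd m a e /\ I e.
    apply: contrapT => /forallNP H; apply: nma.
    rewrite -(mmax (fadd m a)) //; [exact: fadd_in|
      by move=> e0 ae0 Ie0; apply: (H e0)|exact: fadd_sub].
  have [e' [ae' Ie']] : exists e, fadd m (~` a)%O e /\ I e.
    apply: contrapT => /forallNP H; apply: nmna.
    rewrite -(mmax (fadd m (~` a)%O)) //; [exact: fadd_in|
      by move=> e0 ae0 Ie0; apply: (H e0)|exact: fadd_sub].
  case: ae => c mc ce; case: ae' => c' mc' ce'.
  apply: (dM (c `&` c')%O); first exact: filter_meet.
  apply: (ideal_down iI (ideal_join iI Ie Ie')).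
  apply: (@le_trans _ _ ((c `&` c') `&` (a `|` ~` a))%O); first by rewrite joinxC meetx1.
  rewrite meetUr; apply: leU2.
    by apply: le_trans ce; apply: leI2 => //; exact: leIl.
  by apply: le_trans ce'; apply: leI2 => //; exact: leIr.
- by move=> a Fa; left.
Qed.

End UF.

Section UFmore.
Variables (d : Order.disp_t) (A : ctbDistrLatticeType d).
Implicit Types (a b c : A) (x y z F I : set A).

Definition upset a : set A := [set b | (a <= b)%O].
Definition downset a : set A := [set b | (b <= a)%O].

Lemma upset_filter a : ba_filter (upset a).
Proof.
split; first exact: lex1.
- by move=> b c ab bc; exact: le_trans bc.
- by move=> b c ab ac; rewrite /upset /= lexI ab ac.
Qed.

Lemma downset_ideal a : ba_ideal (downset a).
Proof.
split; first exact: le0x.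
- by move=> b c cb bc; exact: le_trans cb.
- by move=> b c ba ca; rewrite /downset /= leUx ba ca.
Qed.

Lemma uf_sep a b : ~ (a <= b)%O -> exists z, [/\ ba_ultrafilter z, z a & ~ z b].
Proof.
move=> nab; have [|z [uz sz dz]] := ult_ext (upset_filter a) (downset_ideal b).
  by move=> e ae eb; apply: nab; exact: le_trans eb.
exists z; split => //.
  by apply: sz; exact: lexx.
by move=> zb; apply: (dz b zb); exact: lexx.
Qed.

Lemma uf_ext F : ba_filter F -> ~ F \bot%O -> exists z, ba_ultrafilter z /\ F `<=` z.
Proof.
move=> fF nb; have [|z [uz sz _]] := ult_ext fF (downset_ideal \bot%O).
  by move=> e Fe; rewrite /downset /= lex0 => /eqP e0; apply: nb; rewrite -e0.
by exists z.
Qed.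

Lemma ultP (x : ult A) : ba_ultrafilter (ult_val x).
Proof. by move: (ult_prop x) => /asboolP. Qed.

Definition mk_ult z (h : ba_ultrafilter z) : ult A := @Ult _ A z (asboolT h).

Definition UU a : set (ult A) := [set x : ult A | ult_val x a].

Lemma UU_meet a b : UU (a `&` b)%O = UU a `&` UU b.
Proof.
apply/seteqP; split => x; have fx := uf_filter (ultP x);
  rewrite /UU /=; [move=> /(filter_meetE _ _ fx)|move=> /(filter_meetE _ _ fx)] => //.
Qed.

Lemma UU_compl a : UU (~` a)%O = ~` UU a.
Proof.
by apply/seteqP; split => x; rewrite /UU /=; move/(uf_compl _ (ultP x)).
Qed.

Lemma UU_join a b : UU (a `|` b)%O = UU a `|` UU b.
Proof.
apply/seteqP; split => x; rewrite /UU /=; first exact: uf_join (ultP x).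
have fx := uf_filter (ultP x).
by case=> h; apply: filter_up fx h _; rewrite ?leUl ?leUr.
Qed.

Lemma UU_top : UU \top%O = setT.
Proof. by apply/seteqP; split => x // _; exact: filter_top (uf_filter (ultP x)). Qed.

Lemma UU_bot : UU \bot%O = set0.
Proof. by apply/seteqP; split => x // h; exact: uf_proper (ultP x) h. Qed.

Lemma UU_le a b : (a <= b)%O -> UU a `<=` UU b.
Proof. by move=> ab x xa; exact: filter_up (uf_filter (ultP x)) xa ab. Qed.

Lemma UU_leE a b : UU a `<=` UU b -> (a <= b)%O.
Proof.
move=> h; apply: contrapT => /uf_sep [z [uz za nzb]].
by apply: nzb; exact: (h (mk_ult uz)).
Qed.

Lemma ult_openE (W : set (ult A)) : open W <->
  exists2 D', D' `<=` finI_from (range (@Some A)) (@ult_subbase _ A) &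
    \bigcup_(i in D') i = W.
Proof. by []. Qed.

Lemma UU_open a : open (UU a).
Proof.
apply/ult_openE; exists [set UU a]; last by rewrite bigcup_set1.
move=> _ ->; apply: (@finI_from1 _ _ _ (@ult_subbase _ A) (Some a)).
by exists a.
Qed.

Lemma UU_closed a : closed (UU a).
Proof. by rewrite -openC -UU_compl; exact: UU_open. Qed.

Lemma UU_clopen a : clopen (UU a).
Proof. by split; [exact: UU_open|exact: UU_closed]. Qed.

Lemma seq_meet (s : seq (option A)) :
  exists c, forall x : ult A, (forall i, i \in s -> ult_subbase i x) <-> UU c x.
Proof.
elim: s => [|i s [c IH]].
  exists \top%O => x; rewrite UU_top; split => // _ i; by rewrite in_nil.
case: i => [a|].
  exists (a `&` c)%O => x; rewrite UU_meet; split.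
    move=> h; split; first by apply: (h (Some a)); rewrite mem_head.
    by apply/IH => i iS; apply: h; rewrite in_cons iS orbT.
  case=> xa /IH h i; rewrite in_cons => /orP [/eqP -> //|]; exact: h.
exists c => x; split.
  by move=> h; apply/IH => i iS; apply: h; rewrite in_cons iS orbT.
by move=> /IH h i; rewrite in_cons => /orP [/eqP -> //|]; exact: h.
Qed.

Lemma ult_basis (W : set (ult A)) (x : ult A) : open W -> W x ->
  exists c, UU c x /\ UU c `<=` W.
Proof.
move=> /ult_openE [D' sD <-] [B /[dup] DB /sD [S _ SB] Bx].
have [c Hc] := seq_meet (finmap.enum_fset S).
exists c; split.
  by apply/Hc => i iS; rewrite -SB in Bx; apply: Bx.
move=> y /Hc yc; exists B => //; rewrite -SB => i iS; exact: yc.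
Qed.

Lemma ult_hausdorff : hausdorff_space (ult A).
Proof.
rewrite open_hausdorff => x y nxy.
have [a [xa nya]] : exists a, ult_val x a /\ ~ ult_val y a.
  apply: contrapT => /forallNP H; move/eqP: nxy; apply; apply: val_inj => /=.
  have [_ _ mx] := ultP x; apply/esym/mx.
  - exact: uf_filter (ultP y).
  - exact: uf_proper (ultP y).
  - by move=> a xa; apply: contrapT => nya; apply: (H a).
exists (UU a, UU (~` a)%O); first by rewrite !inE; split => //; apply/(uf_compl _ (ultP y)).
split; [exact: UU_open|exact: UU_open|].
by rewrite UU_compl setICr.
Qed.

Lemma ult_zero_dim : zero_dim (ult A).
Proof.
move=> W x oW Wx; have [c [xc cW]] := ult_basis oW Wx.
by exists (UU c); split => //; exact: UU_clopen.
Qed.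

Lemma ult_compact : compact [set: ult A].
Proof.
move=> F PF _.
pose x0 : set A := [set a | F (UU a)].
have fx0 : ba_filter x0.
  split; first by rewrite /x0 /= UU_top; exact: filterT.
  - by move=> a b Fa ab; apply: filterS Fa; exact: UU_le.
  - by move=> a b Fa Fb; rewrite /x0 /= UU_meet; exact: filterI.
have [z [uz sz]] := uf_ext fx0 (fun h => @filter_not_empty _ F PF (eq_ind _ F h _ UU_bot)).
exists (mk_ult uz); split => //.
move=> B C FB; rewrite nbhsE => -[O [oO Ox] OC].
have [c [xc cO]] := ult_basis oO Ox.
apply: contrapT => /set0P /negP; rewrite negbK => /eqP BC0.
have : x0 (~` c)%O.
  rewrite /x0 /= UU_compl; apply: filterS FB => y By yc.
  have : (B `&` C) y by split => //; apply: OC; exact: cO.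
  by rewrite BC0.
by move=> /sz /(uf_compl _ uz); apply; exact: xc.
Qed.

Lemma ult_stone : stone_space (ult A).
Proof. by split; [exact: ult_compact|exact: ult_hausdorff|exact: ult_zero_dim]. Qed.

End UFmore.

Lemma closed_relP (X Y : topologicalType) (R : X -> Y -> Prop) :
  (forall x y, ~ R x y -> exists P, exists Q, [/\ open P, open Q, P x, Q y &
     forall x' y', P x' -> Q y' -> ~ R x' y']) -> closed_rel R.
Proof.
move=> H; rewrite /closed_rel -openC openE => -[x y] /= nR.
have [P [Q [oP oQ Px Qy PQ]]] := H x y nR.
exists (P, Q); first by split; apply: open_nbhs_nbhs; split.
by case=> x' y' [/= Px' Qy']; exact: PQ.
Qed.

Section UltFun.
Variables (d1 : Order.disp_t) (A : ctbDistrLatticeType d1).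
Variables (d2 : Order.disp_t) (B : ctbDistrLatticeType d2).

Lemma sub_img_filter (S : A -> B -> Prop) (x : set A) :
  subordination S -> ba_filter x -> ba_filter (rel_img S x).
Proof.
case=> [[S00 S11] SJ SM SLE] fx; split.
- by exists \top%O => //; exact: filter_top.
- by move=> b c [a xa aSb] bc; exists a => //; exact: SLE (lexx a) aSb bc.
- move=> b c [a xa aSb] [a' xa' aSc]; exists (a `&` a')%O; first exact: filter_meet.
  by apply: SM; [apply: SLE aSb (lexx _); exact: leIl|apply: SLE aSc (lexx _); exact: leIr].
Qed.

Lemma R_of_closed (S : A -> B -> Prop) : subordination S -> closed_rel (R_of S).
Proof.
move=> hS; apply: closed_relP => x y nsub.
have [c [[a xa aSc] nyc]] : exists c, rel_img S (ult_val x) c /\ ~ ult_val y c.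
  apply: contrapT => /forallNP H; apply: nsub => c hc.
  by apply: contrapT => nyc; apply: (H c).
exists (UU a), (UU (~` c)%O); split; [exact: UU_open|exact: UU_open|by []| |].
  exact/(uf_compl _ (ultP y)).
move=> x' y' x'a /(uf_compl _ (ultP y')) y'c h; apply: y'c; apply: h.
by exists a.
Qed.

Lemma R_of_le (x y : ult A) : R_of (@ba_le _ A) x y <-> x = y.
Proof.
split => [h|<-]; last first.
  by move=> b [a xa ab]; exact: filter_up (uf_filter (ultP x)) xa ab.
apply: val_inj => /=; have [_ _ mx] := ultP x; apply: esym; apply: mx.
- exact: uf_filter (ultP y).
- exact: uf_proper (ultP y).
- by move=> a xa; apply: h; exists a => //; exact: lexx.
Qed.

End UltFun.

Lemma R_of_comp d1 (A : ctbDistrLatticeType d1) d2 (B : ctbDistrLatticeType d2)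
  d3 (C : ctbDistrLatticeType d3) (S1 : A -> B -> Prop) (S2 : B -> C -> Prop) :
  subordination S1 -> subordination S2 ->
  rel_eq (R_of (rel_comp S2 S1)) (rel_comp (R_of S2) (R_of S1)).
Proof.
move=> h1 h2 x z; split; last first.
  case=> y [xy yz] c [a xa [b [aSb bSc]]].
  by apply: yz; exists b => //; apply: xy; exists a.
move=> xz.
have fF := sub_img_filter h1 (uf_filter (ultP x)).
pose J : set B := [set b | exists c, ~ ult_val z c /\ S2 b c].
have iJ : ba_ideal J.
  case: h2 => [[S00 S11] SJ SM SLE]; split.
  - by exists \bot%O; split => //; exact: uf_proper (ultP z).
  - by move=> a b [c [nzc bSc]] ab; exists c; split => //; exact: SLE ab bSc (lexx c).
  - move=> a b [c [nzc aSc]] [c' [nzc' bSc']]; exists (c `|` c')%O; split.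
      by move=> /(uf_join (ultP z)) [].
    by apply: SJ; [apply: SLE (lexx a) aSc _; exact: leUl|
      apply: SLE (lexx b) bSc' _; exact: leUr].
have [|y [uy Fy dy]] := ult_ext fF iJ.
  move=> b [a xa aSb] [c [nzc bSc]]; apply: nzc; apply: xz.
  by exists a => //; exists b.
exists (mk_ult uy); split; first by move=> b Fb; exact: Fy.
move=> c [b yb bSc]; apply: contrapT => nzc; apply: (dy b yb).
by exists c.
Qed.



Lemma clop_leE (X : topologicalType) (U V : clop X) :
  (U <= V)%O <-> (clop_val U `<=` clop_val V).
Proof. by rewrite leEsub /= subsetEset. Qed.

Definition mk_clop (X : topologicalType) (U : set X) (h : clopen U) : clop X :=
  @Clop X U (asboolT h).

Lemma clopP (X : topologicalType) (U : clop X) : clopen (clop_val U).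
Proof. by move: (clop_prop U) => /asboolP. Qed.

Lemma compact_fip (X : topologicalType) (I : Type) (B : I -> set X) :
  compact [set: X] -> inhabited I ->
  (forall i j, exists k, B k `<=` B i `&` B j) ->
  (forall i, closed (B i)) -> (forall i, B i !=set0) -> exists z, forall i, B i z.
Proof.
move=> cX [i0] BI cB nB.
have FF : Filter (filter_from setT B).
  by apply: filter_fromT_filter => //; exists i0.
have PF : ProperFilter (filter_from setT B).
  by apply: filter_from_proper => // i _; exact: nB.
have [z [_ cz]] := cX _ PF filterT.
exists z => i; apply: (cB i) => C nC; apply: cz nC; by exists i.
Qed.

Section Eps.
Variables (d : Order.disp_t) (A : ctbDistrLatticeType d).

Lemma clopen_UU (W : set (ult A)) : clopen W -> exists c, W = UU c.
Proof.
move=> [oW cW]; apply: contrapT => /forallNP nW.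
pose I := {c : A | UU c `<=` W}.
pose B (i : I) := W `&` UU (~` (sval i))%O.
have [z Hz] : exists z, forall i, B i z.
  apply: compact_fip.
  - exact: ult_compact.
  - by constructor; exists \bot%O; rewrite UU_bot.
  - move=> [c hc] [c' hc']; have h : UU (c `|` c')%O `<=` W.
      by rewrite UU_join => y [/hc|/hc'].
    exists (exist (fun c => UU c `<=` W) _ h); rewrite /B /= !UU_compl UU_join setCU.
    by move=> y [Wy [ncy nc'y]].
  - by move=> i; apply: closedI => //; exact: UU_closed.
  - move=> [c hc]; apply: contrapT => /set0P /negP; rewrite negbK => /eqP h.
    apply: (nW c); apply/seteqP; split => // y Wy; apply: contrapT => ncy.
    have : B (exist (fun c => UU c `<=` W) c hc) y by split => //; rewrite UU_compl.
    by rewrite h.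
have h0 : UU \bot%O `<=` W by rewrite UU_bot.
have [Wz _] := Hz (exist (fun c => UU c `<=` W) _ h0).
have [c [zc cW']] := ult_basis oW Wz.
have [_] := Hz (exist (fun c => UU c `<=` W) _ cW').
by rewrite /= UU_compl.
Qed.

End Eps.

Definition epsR d (A : ctbDistrLatticeType d) (a : A) (W : clop (ult A)) : Prop :=
  UU a `<=` clop_val W.
Definition epsR' d (A : ctbDistrLatticeType d) (W : clop (ult A)) (a : A) : Prop :=
  clop_val W `<=` UU a.
Definition UUc d (A : ctbDistrLatticeType d) (a : A) : clop (ult A) :=
  mk_clop (UU_clopen a).

Section Eps2.
Variables (d : Order.disp_t) (A : ctbDistrLatticeType d).

Lemma eps_sub : subordination (@epsR _ A).
Proof.
rewrite /epsR; split.
- by split => //; rewrite UU_bot.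
- by move=> a b W ha hb; rewrite UU_join => y [/ha|/hb].
- by move=> a W W' h h' y ya; split; [exact: h|exact: h'].
- by move=> a b W W' ab h /clop_leE h'; move=> y /(UU_le ab) /h /h'.
Qed.

Lemma eps'_sub : subordination (@epsR' _ A).
Proof.
rewrite /epsR'; split.
- by split => //; rewrite UU_top.
- by move=> W W' a h h' y [/h|/h'].
- by move=> W a b h h'; rewrite UU_meet => y Wy; split; [exact: h|exact: h'].
- by move=> W W' a b /clop_leE h h' ab y /h /h' /(UU_le ab).
Qed.

Lemma eps_comp1 : rel_eq (rel_comp (@epsR' _ A) (@epsR _ A)) (@ba_le _ A).
Proof.
move=> a b; split.
  by case=> W [h h']; apply: UU_leE => y /h /h'.
by move=> ab; exists (UUc a); split => //; exact: UU_le.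
Qed.

Lemma eps_comp2 : rel_eq (rel_comp (@epsR _ A) (@epsR' _ A)) (@ba_le _ (clop (ult A))).
Proof.
move=> W W'; split.
  by case=> a [h h']; apply/clop_leE => y /h /h'.
move=> /clop_leE WW'.
have [c Wc] := clopen_UU (clopP W).
by exists c; split; rewrite /epsR /epsR' -Wc.
Qed.

Lemma eps_nat d' (B : ctbDistrLatticeType d') (S : A -> B -> Prop) :
  subordination S ->
  rel_eq (rel_comp (S_of (R_of S)) (@epsR _ A)) (rel_comp (@epsR _ B) S).
Proof.
move=> hS a W'; split; last first.
  case=> b [aSb bW']; exists (UUc a); split; first by [].
  move=> y [x xa xy]; apply: bW'; apply: xy; by exists a.
case=> W [aW WW'].
have [c Wc] := clopen_UU (clopP W').
exists c; split; last by rewrite /epsR -Wc.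
apply: contrapT => naSc.
case: (hS) => [[S00 S11] SJ SM SLE].
pose I := [set a' | S a' c].
have iI : ba_ideal I.
  split.
  - by apply: SLE (lexx _) S00 _; exact: le0x.
  - by move=> e f fc ef; exact: SLE ef fc (lexx _).
  - by move=> e f ec fc; exact: SJ.
have [|x [ux xa dx]] := ult_ext (upset_filter a) iI.
  by move=> e ae ec; apply: naSc; exact: SLE ae ec (lexx _).
have fF := sub_img_filter hS (uf_filter ux).
have [|y [uy Fy dy]] := ult_ext fF (downset_ideal c).
  move=> b [a' xa' a'b] bc; apply: (dx a' xa').
  by apply: SLE (lexx _) a'b bc.
have : UU c (mk_ult uy).
  rewrite -Wc; apply: WW'; exists (mk_ult ux).
    by apply: aW; apply: xa; exact: lexx.
  by move=> b Fb; exact: Fy.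
by move=> yc; apply: (dy c yc); exact: lexx.
Qed.

End Eps2.

Section StoneTop.

Lemma snd_cont (X Y : topologicalType) : continuous (@snd X Y).
Proof.
move=> [x y] B /= nB; exists (setT, B) => //=; first by split => //; exact: filterT.
by move=> [? ?] [].
Qed.

Lemma closed_img (X Y : topologicalType) (R : X -> Y -> Prop) (F : set X) :
  compact [set: X] -> compact [set: Y] -> hausdorff_space Y ->
  closed_rel R -> closed F -> closed (rel_img R F).
Proof.
move=> cX cY hY cR cF.
have -> : rel_img R F = snd @` ([set p : X * Y | R p.1 p.2] `&` (F `*` setT)).
  apply/seteqP; split => [y [x Fx Rxy]|_ [[x y] [/= Rxy [Fx _]] <-]].
    by exists (x, y).
  by exists x.
apply: compact_closed hY _.
apply: continuous_compact; first exact: continuous_subspaceT (@snd_cont X Y).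
rewrite setIC; apply: compact_closedI => //.
by apply: compact_setX => //; exact: subclosed_compact cF cX _.
Qed.

Lemma closed_rel_flip (X Y : topologicalType) (R : X -> Y -> Prop) :
  closed_rel R -> closed_rel (fun y x => R x y).
Proof.
move=> cR; rewrite /closed_rel.
have -> : [set p : Y * X | R p.2 p.1] = unstable.swap @^-1` [set p : X * Y | R p.1 p.2] by [].
apply: preimage_closed => // p _; exact: swap_continuous.
Qed.

Variables (X : topologicalType) (hX : stone_space X).

Lemma stone_compact : compact [set: X]. Proof. by case: hX. Qed.
Lemma stone_haus : hausdorff_space X. Proof. by case: hX. Qed.

Lemma sep_pt_closed (K : set X) (x : X) : closed K -> ~ K x ->
  exists U, [/\ clopen U, U x & U `<=` ~` K].
Proof.
move=> cK nKx; case: hX => _ _ zd.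
by apply: zd => //; exact: closed_openC.
Qed.

Lemma sep_pts (x y : X) : x <> y -> exists U, [/\ clopen U, U x & ~ U y].
Proof.
move=> nxy.
have cy : closed [set y].
  apply: accessible_closed_set1; apply: hausdorff_accessible; exact: stone_haus.
have [U [cU Ux UK]] := sep_pt_closed cy nxy.
by exists U; split => // Uy; exact: UK Uy _.
Qed.

Lemma sep_closed_pt (K : set X) (y : X) : closed K -> ~ K y ->
  exists W, [/\ clopen W, K `<=` W & ~ W y].
Proof.
move=> cK nKy; apply: contrapT => nW.
pose I := {V : set X | clopen V /\ V y}.
pose B (i : I) := K `&` sval i.
have [z Hz] : exists z, forall i, B i z.
  apply: compact_fip.
  - exact: stone_compact.
  - by constructor; exists setT; split => //; exact: clopenT.
  - move=> [V [cV Vy]] [V' [cV' V'y]].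
    have h : clopen (V `&` V') /\ (V `&` V') y by split => //; exact: clopenI.
    by exists (exist (fun V : set X => clopen V /\ V y) _ h); rewrite /B /= => w [Kw [Vw V'w]].
  - by move=> [V [[oV cV] Vy]]; rewrite /B /=; exact: closedI.
  - move=> [V [cV Vy]]; apply: contrapT => /set0P /negP; rewrite negbK => /eqP h.
    apply: nW; exists (~` V); split.
    + exact: clopenC.
    + move=> w Kw Vw; have : B (exist (fun V : set X => clopen V /\ V y) V (conj cV Vy)) w by [].
      by rewrite h.
    + by apply.
have [Kz _] := Hz (exist (fun V : set X => clopen V /\ V y) setT (conj clopenT Logic.I)).
have [|U [cU Uy nUz]] := @sep_pts y z.
  by move=> yz; apply: nKy; rewrite yz.
by have [_ /= Uz] := Hz (exist (fun V : set X => clopen V /\ V y) U (conj cU Uy)).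
Qed.

Lemma sep_closed_closed (K L : set X) : closed K -> closed L -> K `&` L = set0 ->
  exists W, [/\ clopen W, K `<=` W & W `&` L = set0].
Proof.
move=> cK cL KL; apply: contrapT => nW.
pose I := {W : set X | clopen W /\ K `<=` W}.
pose B (i : I) := L `&` sval i.
have [z Hz] : exists z, forall i, B i z.
  apply: compact_fip.
  - exact: stone_compact.
  - by constructor; exists setT; split => //; exact: clopenT.
  - move=> [V [cV Vy]] [V' [cV' V'y]].
    have h : clopen (V `&` V') /\ K `<=` (V `&` V').
      by split; [exact: clopenI|move=> w Kw; split; [exact: Vy|exact: V'y]].
    by exists (exist (fun W : set X => clopen W /\ K `<=` W) _ h); rewrite /B /= => w [Kw [Vw V'w]].
  - by move=> [V [[oV cV] Vy]]; rewrite /B /=; exact: closedI.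
  - move=> [V [cV Vy]]; apply: contrapT => /set0P /negP; rewrite negbK => /eqP h.
    by apply: nW; exists V; split => //; rewrite setIC.
have [Lz _] := Hz (exist (fun W : set X => clopen W /\ K `<=` W) setT (conj clopenT (fun _ _ => Logic.I))).
have [|W [cW KW nWz]] := @sep_closed_pt K z cK.
  by move=> Kz; have : (K `&` L) z by []; rewrite KL.
by have [_ /= Wz] := Hz (exist (fun W : set X => clopen W /\ K `<=` W) W (conj cW KW)).
Qed.

End StoneTop.

Lemma S_of_sub (X Y : topologicalType) (R : X -> Y -> Prop) : subordination (S_of R).
Proof.
rewrite /S_of; split.
- by split => // y [x].
- by move=> U V W hU hV y [x [Ux|Vx] Rxy]; [apply: hU|apply: hV]; exists x.
- by move=> U V W hV hW y Uy; split; [exact: hV|exact: hW].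
- move=> U U' V V' /clop_leE UU' h /clop_leE VV' y [x Ux Rxy].
  by apply: VV'; apply: h; exists x => //; exact: UU'.
Qed.

Lemma S_of_id (X : topologicalType) : rel_eq (S_of (@rel_id X)) (@ba_le _ (clop X)).
Proof.
move=> U V; rewrite /ba_le clop_leE /S_of; split.
  by move=> h x Ux; apply: h; exists x.
by move=> h y [x Ux <-]; exact: h.
Qed.

Lemma S_of_comp (X Y Z : topologicalType) (R1 : X -> Y -> Prop) (R2 : Y -> Z -> Prop) :
  stone_space X -> stone_space Y -> stone_space Z ->
  closed_rel R1 -> closed_rel R2 ->
  rel_eq (S_of (rel_comp R2 R1)) (rel_comp (S_of R2) (S_of R1)).
Proof.
move=> hX hY hZ c1 c2 U V; split; last first.
  case=> W [h1 h2] z [x Ux [y [R1xy R2yz]]].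
  by apply: h2; exists y => //; apply: h1; exists x.
move=> h.
have cK : closed (rel_img R1 (clop_val U)).
  apply: closed_img => //; [exact: stone_compact|exact: stone_compact|
    exact: stone_haus|by case: (clopP U)].
have cL : closed (rel_img (fun z y => R2 y z) (~` clop_val V)).
  apply: closed_img => //; [exact: stone_compact|exact: stone_compact|
    exact: stone_haus|exact: closed_rel_flip|].
  by rewrite -openC setCK; case: (clopP V).
have [|W [cW KW WL]] := sep_closed_closed hY cK cL.
  apply/seteqP; split => // y [[x Ux R1xy] [z nVz R2yz]].
  by apply: nVz; apply: h; exists x => //; exists y.
exists (mk_clop cW); split; first by move=> y hy; exact: KW.
move=> z [y Wy R2yz]; apply: contrapT => nVz.
have : (W `&` rel_img (fun z y => R2 y z) (~` clop_val V)) y by split => //; exists z.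
by rewrite WL.
Qed.

Lemma clop_complE (X : topologicalType) (U : clop X) : clop_val (~` U)%O = ~` clop_val U.
Proof. by []. Qed.

Section Eta.
Variable X : topologicalType.

Definition etaR (x : X) (u : ult (clop X)) : Prop :=
  forall U : clop X, clop_val U x <-> ult_val u U.

Definition pf (x : X) : set (clop X) := [set U | clop_val U x].

Lemma pf_uf x : ba_ultrafilter (pf x).
Proof.
apply: prime_uf.
- split => //.
  by move=> U V Ux /clop_leE UV; exact: UV.
- by rewrite /pf /=.
- move=> U.
  by have [h|h] := pselect (clop_val U x); [left|right; exact: h].
Qed.

Definition pt x : ult (clop X) := mk_ult (pf_uf x).

Lemma etaP x u : etaR x u <-> u = pt x.
Proof.
split => [h|->]; last by [].
by apply: val_inj; apply/seteqP; split => U /=; rewrite /pf /=; move/h.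
Qed.

Lemma neq_pt x u : u <> pt x -> exists U, ult_val u U /\ ~ clop_val U x.
Proof.
move=> ne; apply: contrapT => /forallNP H; apply: ne; apply: val_inj => /=.
have [_ _ mu] := ultP u; apply: esym; apply: mu.
- exact: uf_filter (pf_uf x).
- exact: uf_proper (pf_uf x).
- by move=> U uU; apply: contrapT => nUx; exact: (H U).
Qed.

Lemma etaR_closed : closed_rel etaR.
Proof.
apply: closed_relP => x u /etaP /neq_pt [U [uU nUx]].
exists (~` clop_val U), (UU U); split => //.
- by rewrite openC; case: (clopP U).
- exact: UU_open.
- by move=> x' u' nUx' u'U /(_ U) [_ /(_ u'U)].
Qed.

Lemma etaR'_closed : closed_rel (fun u x => etaR x u).
Proof.
apply: closed_relP => u x /etaP /neq_pt [U [uU nUx]].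
exists (UU U), (~` clop_val U); split => //.
- exact: UU_open.
- by rewrite openC; case: (clopP U).
- by move=> u' x' u'U nUx' /(_ U) [_ /(_ u'U)].
Qed.

Variable hX : stone_space X.

Lemma pt_inj x x' : pt x = pt x' -> x = x'.
Proof.
move=> e; apply: contrapT => nxx'.
have [U [cU Ux nUx']] := sep_pts hX nxx'.
have : ult_val (pt x) (mk_clop cU) by [].
by rewrite e.
Qed.

Lemma pt_surj (u : ult (clop X)) : exists x, u = pt x.
Proof.
pose I := {U : clop X | ult_val u U}.
have [x Hx] : exists x, forall i : I, clop_val (sval i) x.
  apply: compact_fip.
  - exact: stone_compact.
  - by constructor; exists \top%O; exact: filter_top (uf_filter (ultP u)).
  - move=> [U uU] [V uV].
    exists (exist (fun U => ult_val u U) _ (filter_meet (uf_filter (ultP u)) uU uV)).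
    by move=> y.
  - by move=> [U uU] /=; case: (clopP U).
  - move=> [U uU] /=; apply: contrapT => /set0P /negP; rewrite negbK => /eqP h.
    apply: (uf_proper (ultP u)).
    have -> : (\bot%O : clop X) = U by apply: val_inj.
    exact: uU.
exists x; apply: val_inj => /=.
have [_ _ mu] := ultP u; apply: esym; apply: mu.
- exact: uf_filter (pf_uf x).
- exact: uf_proper (pf_uf x).
- by move=> U uU; exact: (Hx (exist _ U uU)).
Qed.

Lemma eta_iso : stone_iso etaR.
Proof.
split; first exact: etaR_closed.
exists (fun u x => etaR x u); split.
- exact: etaR'_closed.
- move=> x x'; split.
    by case=> u [/etaP -> /etaP] /pt_inj ->.
  by move=> <-; exists (pt x); split; apply/etaP.
- move=> u u'; split.
    by case=> x [/etaP -> /etaP ->].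
  move=> <-; have [x ->] := pt_surj u.
  by exists x; split; apply/etaP.
Qed.

End Eta.

Lemma eta_nat (X Y : topologicalType) (R : X -> Y -> Prop) :
  stone_space X -> stone_space Y -> closed_rel R ->
  rel_eq (rel_comp (R_of (S_of R)) (@etaR X)) (rel_comp (@etaR Y) R).
Proof.
move=> hX hY cR x v; split; last first.
  case=> y [Rxy /etaP ->]; exists (pt x); split; first by apply/etaP.
  by move=> V [U Ux hUV]; apply: hUV; exists x.
case=> u [/etaP -> h].
have [y ey] := pt_surj hY v.
exists y; split; last by apply/etaP.
apply: contrapT => nR.
have cK : closed (rel_img R [set x]).
  apply: closed_img => //; [exact: stone_compact|exact: stone_compact|
    exact: stone_haus|].
  apply: accessible_closed_set1; apply: hausdorff_accessible; exact: stone_haus.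
have nKy : ~ rel_img R [set x] y by case=> x' /= -> .
have [V [cV Vy VK]] := sep_pt_closed hY cK nKy.
have cL : closed (rel_img (fun y x => R x y) V).
  apply: closed_img => //; [exact: stone_compact|exact: stone_compact|
    exact: stone_haus|exact: closed_rel_flip|by case: cV].
have nLx : ~ rel_img (fun y x => R x y) V x.
  by case=> y' Vy' Rxy'; apply: (VK y' Vy'); exists x.
have [U [cU Ux UL]] := sep_pt_closed hX cL nLx.
have hS : S_of R (mk_clop cU) (~` mk_clop cV)%O.
  rewrite /S_of clop_complE.
  by move=> y' [x' Ux' Rx'y'] Vy'; apply: (UL x' Ux'); exists y'.
have := h (~` mk_clop cV)%O (ex_intro2 _ _ (mk_clop cU) Ux hS).
rewrite ey => H.
have H' : clop_val (~` mk_clop cV)%O y := H.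
by rewrite clop_complE in H'; exact: H' Vy.
Qed.

Close Scope classical_set_scope.

Theorem corollary2p6 :
  (* ---- Clop : Stone^R -> BA^S is a functor ---- *)
  (forall (X Y : topologicalType) (R : X -> Y -> Prop),
      stone_space X -> stone_space Y -> closed_rel R ->
      subordination (S_of R)) /\
  (forall X : topologicalType, stone_space X ->
      rel_eq (S_of (@rel_id X)) (@ba_le _ (clop X))) /\
  (forall (X Y Z : topologicalType) (R1 : X -> Y -> Prop) (R2 : Y -> Z -> Prop),
      stone_space X -> stone_space Y -> stone_space Z ->
      closed_rel R1 -> closed_rel R2 ->
      rel_eq (S_of (rel_comp R2 R1)) (rel_comp (S_of R2) (S_of R1))) /\
  (* ---- Ult : BA^S -> Stone^R is a functor ---- *)
  (forall (d : Order.disp_t) (A : ctbDistrLatticeType d), stone_space (ult A)) /\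
  (forall (d1 : Order.disp_t) (A : ctbDistrLatticeType d1)
          (d2 : Order.disp_t) (B : ctbDistrLatticeType d2) (S : A -> B -> Prop),
      subordination S -> closed_rel (R_of S)) /\
  (forall (d : Order.disp_t) (A : ctbDistrLatticeType d),
      rel_eq (R_of (@ba_le _ A)) (@rel_id (ult A))) /\
  (forall (d1 : Order.disp_t) (A : ctbDistrLatticeType d1)
          (d2 : Order.disp_t) (B : ctbDistrLatticeType d2)
          (d3 : Order.disp_t) (C : ctbDistrLatticeType d3)
          (S1 : A -> B -> Prop) (S2 : B -> C -> Prop),
      subordination S1 -> subordination S2 ->
      rel_eq (R_of (rel_comp S2 S1)) (rel_comp (R_of S2) (R_of S1))) /\
  (* ---- natural isomorphism  Id_{Stone^R} ~= Ult o Clop ---- *)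
  (exists eta : forall X : topologicalType, X -> ult (clop X) -> Prop,
      forall X : topologicalType, stone_space X ->
        stone_iso (eta X) /\
        (forall (Y : topologicalType) (R : X -> Y -> Prop),
            stone_space Y -> closed_rel R ->
            rel_eq (rel_comp (R_of (S_of R)) (eta X)) (rel_comp (eta Y) R))) /\
  (* ---- natural isomorphism  Id_{BA^S} ~= Clop o Ult ---- *)
  (exists eps : forall (d : Order.disp_t) (A : ctbDistrLatticeType d),
                  A -> clop (ult A) -> Prop,
      forall (d : Order.disp_t) (A : ctbDistrLatticeType d),
        ba_iso (eps d A) /\
        (forall (d' : Order.disp_t) (B : ctbDistrLatticeType d')
                (S : A -> B -> Prop),
            subordination S ->
            rel_eq (rel_comp (S_of (R_of S)) (eps d A))
                   (rel_comp (eps d' B) S))).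
Proof.
split; first by move=> X Y R _ _ _; exact: S_of_sub.
split; first by move=> X _; exact: S_of_id.
split; first by move=> X Y Z R1 R2 hX hY hZ c1 c2; exact: S_of_comp.
split; first by move=> d A; exact: ult_stone.
split; first by move=> d1 A d2 B S hS; exact: R_of_closed.
split; first by move=> d A x y; exact: R_of_le.
split; first by move=> d1 A d2 B d3 C S1 S2 h1 h2; exact: R_of_comp.
split.
  exists (fun X => @etaR X) => X hX; split; first exact: eta_iso.
  by move=> Y R hY cR; exact: eta_nat.
exists (fun d A => @epsR d A) => d A; split.
  split; first exact: eps_sub.
  by exists (@epsR' d A); split; [exact: eps'_sub|exact: eps_comp1|exact: eps_comp2].
by move=> d' B S hS; exact: eps_nat.
Qed.
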